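(* Let $k$ be a field, $V$ a finite-dimensional $k$-vector space, $A$ a finite arrangement of linear hyperplanes in $V$ with intersection lattice $L$ and natural sheaf $F$, and let $\widetilde L$ be the Boolean cover of $L$. Then $$\chi_q\,\mathrm{HC}_*(\widetilde L;\Lambda^\bullet F)=\chi_L(1+q).$$
   Context: $L$ consists of all intersections of subsets of $A$ (empty intersection $=V$), ordered by reverse inclusion, with minimum $\mathbf{0}=V$; atoms are the hyperplanes. Möbius function: $\mu_L(x,x)=1$, $\mu_L(x,y)=-\sum_{x\le z<y}\mu_L(x,z)$; $\chi_L(t)=\sum_{x\in L}\mu_L(\mathbf{0},x)t^{\dim x}$. A sheaf assigns a vector space $G(x)$ to each element and a linear map $G^y_x:G(y)\to G(x)$ to each $x\le y$, functorially. Natural sheaf: $F(x)=x$, $F^y_x$ the inclusion $y\subseteq x$; $\Lambda^jF$ has $(\Lambda^jF)(x)=\Lambda^j(F(x))$, maps $\Lambda^j(F^y_x)$; $\Lambda^\bullet F=\bigoplus_{j\ge0}\Lambda^jF$. Graded Euler characteristic: $\chi_q\,\mathrm{HC}_*(\widetilde L;\Lambda^\bullet F)=\sum_{k\ge0}q^k\sum_n(-1)^n\dim\mathrm{HC}_n(\widetilde L;\Lambda^kF)$. Boolean cover: $\widetilde L$ is the lattice of subsets of $A$ under inclusion, $f(S)=\bigcap_{a\in S}a$, induced sheaf $G(S)=G(f(S))$ with maps $G^{f(T)}_{f(S)}$. Cellular homology of a Boolean lattice of subsets of $\{a_1,\dots,a_n\}$ with sheaf $G$: homology of $C_k=\bigoplus_{|x|=k}G(x)$,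 $d=\sum\varepsilon^x_yG^x_y$ over $y\subset x$, $|y|=|x|-1$, with $\varepsilon^x_y=(-1)^{j-1}$ when $x=\{a_{i_1},\dots,a_{i_k}\}$ ($i_1<\cdots<i_k$), $y=x\setminus\{a_{i_j}\}$. *)

(* Defs.v *)
From HB Require Import structures.
From mathcomp Require Import all_boot all_order all_algebra.
Set Implicit Arguments. Unset Strict Implicit. Unset Printing Implicit Defensive.
Import GRing.Theory.
Local Open Scope ring_scope.

Section Arrangement.
Variables (k : fieldType) (V : vectType k).
Local Notation d := (\dim {:V}).

Definition fS n (H : 'I_n -> {vspace V}) (X : {set 'I_n}) : {vspace V} :=
  (\bigcap_(i in X) H i)%VS.

(* Model of exterior powers: Lambda^j(V) is embedded in the j-th tensor power
   V^{(x) j} (coordinates w.r.t. the basis vbasis {:V}) by antisymmetrization;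
   v_1 /\ ... /\ v_j has coordinate det[coord_{h b}(v_a)] at e_{h 1} (x)...(x) e_{h j}. *)
Definition ExtT (j : nat) := {ffun {ffun 'I_j -> 'I_d} -> k^o}.

Definition wedge j (vs : 'I_j -> V) : ExtT j :=
  [ffun h : {ffun 'I_j -> 'I_d} => \det (\matrix_(a < j, b < j) coord (vbasis {:V}) (h b) (vs a))].

(* Lambda^j(W) for a subspace W, realized inside Lambda^j(V): the span of wedges
   of vectors of W (spanned by wedges of basis vectors of W).  With this model the
   maps Lambda^j(F^y_x) induced by inclusions y <= x are inclusions. *)
Definition Ext j (W : {vspace V}) : {vspace ExtT j} :=
  (\sum_(g : {ffun 'I_j -> 'I_(\dim W)})
      <[wedge (fun a => tnth (vbasis W) (g a))]>)%VS.

(* Ambient space for the cellular chains on the Boolean lattice of subsets of A *)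
Definition ChainT n j := {ffun {set 'I_n} -> ExtT j}.

Definition ins n j (S0 : {set 'I_n}) : 'Hom(ExtT j, ChainT n j) :=
  linfun (fun t : ExtT j => [ffun Y : {set 'I_n} => if Y == S0 then t else 0] : ChainT n j).

Definition chains n (H : 'I_n -> {vspace V}) j m : {vspace ChainT n j} :=
  (\sum_(X : {set 'I_n} | #|X| == m) (ins j X @: Ext j (fS H X)))%VS.

(* cellular differential: d = sum eps^x_y G^x_y, where for x = y u {a_i},
   eps^x_y = (-1)^(position of a_i in x, minus 1) = (-1)^#{l in y | l < i} *)
Definition bdry n j : 'End(ChainT n j) :=
  linfun (fun c : ChainT n j =>
    [ffun Y : {set 'I_n} => \sum_(i : 'I_n | i \notin Y)
                 ((-1) ^+ #|[set l in Y | (l < i)%N]|) *: c (i |: Y)] : ChainT n j).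

Definition HCdim n (H : 'I_n -> {vspace V}) j m : nat :=
  (\dim (chains H j m :&: lker (bdry n j))%VS - \dim (bdry n j @: chains H j m.+1)%VS)%N.

(* sum_m (-1)^m dim HC_m(L~; Lambda^j F)  (C_m = 0 for m > n) *)
Definition euler n (H : 'I_n -> {vspace V}) j : int :=
  \sum_(m < n.+1) (-1) ^+ m * (HCdim H j m)%:Z.

Definition latt n (H : 'I_n -> {vspace V}) : seq {vspace V} :=
  undup [seq fS H X | X : {set 'I_n}].

(* mu_L(0, y), 0 = V, order = reverse inclusion:
   mu(0,0)=1, mu(0,y) = - sum_{z in L, 0 <= z < y} mu(0,z), i.e. y strictly inside z.
   The fuel d.+1 suffices since dimension strictly increases along the recursion. *)
Fixpoint mob_aux (L : seq {vspace V}) (fuel : nat) (y : {vspace V}) : int :=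
  match fuel with
  | 0 => 0
  | f.+1 => if y == fullv then 1
            else - \sum_(z <- L | (y <= z)%VS && (z != y)) mob_aux L f z
  end.

Definition mobius n (H : 'I_n -> {vspace V}) (y : {vspace V}) : int :=
  mob_aux (latt H) d.+1 y.

Definition chiL n (H : 'I_n -> {vspace V}) : {poly int} :=
  \sum_(x <- latt H) (mobius H x)%:P * 'X^(\dim x).

End Arrangement.

(* Main.v *)
Require Import Defs.
From HB Require Import structures.
From mathcomp Require Import all_boot all_order all_algebra fingroup perm.
From mathcomp Require Import ring zify.
Import GRing.Theory. Local Open Scope ring_scope.
Set Implicit Arguments. Unset Strict Implicit.

Lemma det_expand (R : comRingType) j m (al : 'I_j -> 'I_m -> R) (B : 'I_m -> 'I_j -> R) :
  \det (\matrix_(a, b) \sum_c al a c * B c b) =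
  \sum_(g : {ffun 'I_j -> 'I_m}) (\prod_a al a (g a)) * \det (\matrix_(a, b) B (g a) b).
Proof.
rewrite /determinant.
under eq_bigr => s _.
  rewrite (eq_bigr (fun a => \sum_c al a c * B c (s a))); last by move=> a _; rewrite mxE.
  rewrite bigA_distr_bigA big_distrr /=.
  over.
rewrite exchange_big /=; apply: eq_bigr => g _.
rewrite big_distrr /=; apply: eq_bigr => s _.
rewrite big_split /= mulrCA; congr (_ * (_ * _)).
by apply: eq_bigr => a _; rewrite mxE.
Qed.

Section ExtSec.
Variables (k : fieldType) (V : vectType k).
Local Notation d := (\dim {:V}).
Local Notation e := (vbasis {:V}).

Lemma eq_wedge j (vs ws : 'I_j -> V) : vs =1 ws -> wedge vs = wedge ws.
Proof.
move=> E; apply/ffunP => h; rewrite !ffunE; congr (\det _).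
by apply/matrixP => a b; rewrite !mxE E.
Qed.

Lemma wedgeE j (vs : 'I_j -> V) h :
  wedge vs h = \det (\matrix_(a, b) coord e (h b) (vs a)).
Proof. by rewrite ffunE. Qed.

Lemma wedge_lin j m (al : 'I_j -> 'I_m -> k) (w : 'I_m -> V) :
  wedge (fun a => \sum_c al a c *: w c) =
  \sum_(g : {ffun 'I_j -> 'I_m}) (\prod_a al a (g a)) *: wedge (fun a => w (g a)).
Proof.
apply/ffunP => h; rewrite sum_ffunE wedgeE.
rewrite (_ : \matrix_(a, b) _ = \matrix_(a, b) \sum_c al a c * coord e (h b) (w c)).
  rewrite det_expand; apply: eq_bigr => g _; rewrite ffunE wedgeE //.
apply/matrixP => a b; rewrite !mxE linear_sum; apply: eq_bigr => c _.
by rewrite linearZ.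
Qed.

End ExtSec.

Section ExtSec2.
Variables (k : fieldType) (V : vectType k).

Lemma wedge_in_Ext j (W : {vspace V}) (vs : 'I_j -> V) :
  (forall a, vs a \in W) -> wedge vs \in Ext j W.
Proof.
move=> vW.
have E : vs =1 (fun a => \sum_(c < \dim W) coord (vbasis W) c (vs a) *: (vbasis W)`_c).
  by move=> a; exact: coord_vbasis.
rewrite (eq_wedge E) wedge_lin; apply: memv_suml => g _; apply: memvZ.
rewrite /Ext; apply: (sumv_sup g) => //; rewrite -memvE.
rewrite (@eq_wedge _ _ _ _ (fun a => tnth (vbasis W) (g a))); first exact: memv_line.
by move=> a; rewrite (tnth_nth 0).
Qed.

Lemma Ext_mono j (W W' : {vspace V}) : (W <= W')%VS -> (Ext j W <= Ext j W')%VS.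
Proof.
move=> sW; apply/subv_sumP => g _; rewrite -memvE; apply: wedge_in_Ext => a.
by apply: (subvP sW); apply: vbasis_mem; apply: mem_tnth.
Qed.

End ExtSec2.

Section ExtSec3.
Variables (k : fieldType) (V : vectType k).

Lemma wedge_perm j (vs : 'I_j -> V) (p : 'S_j) :
  wedge (fun a => vs (p a)) = (-1) ^+ p *: wedge vs.
Proof.
apply/ffunP => h; rewrite !ffunE /=.
transitivity (\det (perm_mx (R:=k) p) * \det (\matrix_(a, b) coord (vbasis fullv) (h b) (vs a))); last by rewrite det_perm.
rewrite -det_mulmx -row_permE.
by congr (\det _); apply/matrixP => a b; rewrite !mxE.
Qed.

Lemma wedge_noninj j (vs : 'I_j -> V) a1 a2 : a1 != a2 -> vs a1 = vs a2 -> wedge vs = 0.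
Proof.
move=> n12 e12; apply/ffunP => h; rewrite !ffunE.
by apply: (determinant_alternate n12) => b; rewrite !mxE e12.
Qed.

Definition STup j r := [set t : j.-tuple 'I_r | sorted ltn (map val t)].

Definition wB j (W : {vspace V}) (t : j.-tuple 'I_(\dim W)) :=
  wedge (fun a => tnth (vbasis W) (tnth t a)).

Lemma Ext_sub_sorted j (W : {vspace V}) :
  (Ext j W <= \sum_(t in STup j (\dim W)) <[wB t]>)%VS.
Proof.
apply/subv_sumP => g _; rewrite -memvE.
have [ginj|] := boolP (injectiveb g); last first.
  move/injectivePn => [a1 [a2 n12 e12]].
  by rewrite (wedge_noninj (a1 := a1) (a2 := a2)) ?mem0v // e12.
pose t0 : j.-tuple 'I_(\dim W) := [tuple g a | a < j].
pose t := sort_tuple (fun x y : 'I_(\dim W) => (x <= y)%N) t0.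
have pt : perm_eq t0 t by rewrite perm_sym perm_sort.
have [p Ep] := tuple_permP pt.
have Eg : forall a, g a = tnth t (p a).
  move=> a; have Ep' : t0 = [tuple tnth t (p i) | i < j] := val_inj Ep.
  by have := congr1 (fun s => tnth s a) Ep'; rewrite /= !tnth_mktuple.
rewrite (@eq_wedge _ _ _ _ (fun a => (fun b => tnth (vbasis W) (tnth t b)) (p a))); last first.
  by move=> a; rewrite Eg.
rewrite (wedge_perm (fun b => tnth (vbasis W) (tnth t b)) p); apply: memvZ; apply: (sumv_sup t); last exact: memv_line.
rewrite inE ltn_sorted_uniq_leq; apply/andP; split.
  rewrite (map_inj_uniq val_inj) sort_uniq map_inj_uniq ?enum_uniq //.
  exact/injectiveP.
rewrite sorted_map; apply: (sort_sorted (fun x y : 'I_(\dim W) => leq_total x y)).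
Qed.

Lemma dim_Ext_le j (W : {vspace V}) : (\dim (Ext j W) <= 'C(\dim W, j))%N.
Proof.
apply: leq_trans (dimvS (Ext_sub_sorted j W)) _.
apply: leq_trans (dimv_leq_sum _ _ _) _.
rewrite -(card_ltn_sorted_tuples j (\dim W)) -/(STup j (\dim W)) -sum1_card.
by apply: leq_sum => t _; rewrite dim_vline leq_b1.
Qed.

End ExtSec3.

Lemma det_row0 (R : comRingType) n (A : 'M[R]_n) i : (forall b, A i b = 0) -> \det A = 0.
Proof. by move=> A0; rewrite (expand_det_row A i) big1 // => b _; rewrite A0 mul0r. Qed.

Section ExtSec4.
Variables (k : fieldType) (V : vectType k).
Local Notation e := (vbasis {:V}).

Lemma nice_basis (W : {vspace V}) :
  exists (p : 'I_(\dim W) -> 'I_(\dim {:V})) (w : 'I_(\dim W) -> V),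
    (forall a, w a \in W) /\ (forall a b, coord e (p b) (w a) = (a == b)%:R).
Proof.
pose M : 'M[k]_(\dim W, \dim {:V}) := \matrix_(c, i) coord e i (tnth (vbasis W) c).
have Mfree : row_free M.
  apply: inj_row_free => u uM0.
  pose v := \sum_(c < \dim W) u 0 c *: (vbasis W)`_c.
  have v0 : v = 0.
    rewrite (coord_vbasis (memvf v)); apply: big1 => i _.
    have : (u *m M) 0 i = 0 by rewrite uM0 mxE.
    rewrite mxE => E; rewrite [coord _ _ _](_ : _ = 0) ?scale0r //.
    rewrite -[RHS]E /v linear_sum; apply: eq_bigr => c _.
    by rewrite linearZ /= mxE (tnth_nth 0).
  have /freeP Hf := basis_free (vbasisP W); have uc := Hf (fun c => u 0 c) v0.
  by apply/rowP => c; rewrite !mxE uc.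
have fA : row_full M^T by rewrite /row_full mxrank_tr.
pose p := fullrankfun fA.
pose N := (rowsub p M^T)^T.
have Nu : N \in unitmx by rewrite unitmx_tr; exact: fullrowsub_unit.
pose Q := invmx N.
exists (fun b => p b), (fun a => \sum_c Q a c *: tnth (vbasis W) c); split.
  move=> a; apply: memv_suml => c _; apply: memvZ; apply: vbasis_mem; exact: mem_tnth.
move=> a b; rewrite linear_sum /=.
have := mulVmx Nu => /matrixP /(_ a b); rewrite !mxE => <-.
by apply: eq_bigr => c _; rewrite linearZ /= !mxE.
Qed.

Lemma dim_Ext_ge j (W : {vspace V}) : ('C(\dim W, j) <= \dim (Ext j W))%N.
Proof.
have [p [w [wW cw]]] := nice_basis W.
pose ST := STup j (\dim W).
pose wl (t : j.-tuple 'I_(\dim W)) := wedge (fun a => w (tnth t a)).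
pose ht (t : j.-tuple 'I_(\dim W)) : {ffun 'I_j -> 'I_(\dim {:V})} := [ffun b => p (tnth t b)].
have key : forall t t', t \in ST -> t' \in ST -> wl t (ht t') = (t == t')%:R.
  move=> t t'; rewrite !inE => st st'.
  have sortT : forall u : j.-tuple 'I_(\dim W), sorted ltn (map val u) ->
      sorted (fun x y : 'I_(\dim W) => (x < y)%N) u by move=> u; rewrite sorted_map.
  have uT : forall u : j.-tuple 'I_(\dim W), sorted ltn (map val u) -> uniq u.
    by move=> u su; have := sorted_uniq ltn_trans ltnn su; rewrite (map_inj_uniq val_inj).
  rewrite /wl /ht wedgeE.
  rewrite (_ : \matrix_(a, b) _ = \matrix_(a, b) (tnth t a == tnth t' b)%:R); last first.
    by apply/matrixP => a b; rewrite !mxE ffunE cw.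
  have [<-|ntt] := eqVneq t t'.
    have /tuple_uniqP ti := uT t st.
    rewrite (_ : \matrix_(a, b) _ = 1%:M) ?det1 ?eqxx //.
    by apply/matrixP => a b; rewrite !mxE (inj_eq ti).
  have [a ha] : exists a, tnth t a \notin t'.
    case: (pickP (fun a => tnth t a \notin t')) => [a ha|H]; first by exists a.
    have sub : {subset t <= t'}.
      by move=> x /tnthP [a ->]; have := H a; move/negbFE.
    have sz : (size t' <= size t)%N by rewrite !size_tuple.
    have [_ eqt] := uniq_min_size (uT t st) sub sz.
    have := @irr_sorted_eq _ (fun x y : 'I_(\dim W) => (x < y)%N) (fun a b c => @ltn_trans (val a) (val b) (val c)) (fun x => ltnn (val x)) _ _ (sortT t st) (sortT t' st') eqt.
    by move/val_inj => E; rewrite E eqxx in ntt.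
  rewrite (det_row0 (i := a)) ?(negbTE ntt) // => b; rewrite mxE.
  rewrite (_ : (tnth t a == tnth t' b) = false) //; apply/negbTE; apply: contra ha => /eqP ->.
  exact: mem_tnth.
pose X := [tuple wl (enum_val i) | i < #|ST|].
have Xfree : free X.
  apply/freeP => kk Ek i0.
  have XE : forall i : 'I_#|ST|, X`_i = wl (enum_val i) by move=> i; rewrite -tnth_nth tnth_mktuple.
  rewrite (eq_bigr (fun i => kk i *: wl (enum_val i))) in Ek; last by move=> i _; rewrite XE.
  have := congr1 (fun f : ExtT V j => f (ht (enum_val i0))) Ek.
  rewrite /= sum_ffunE ffunE (bigD1 i0) //= big1 ?addr0.
    by rewrite ffunE key ?enum_valP // eqxx => E; rewrite -[kk i0]mulr1; exact: E.
  move=> i ni; rewrite ffunE key ?enum_valP //.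
  by rewrite (inj_eq enum_val_inj) (negbTE ni); exact: (mulr0 (kk i)).
have : (<<X>> <= Ext j W)%VS.
  apply/span_subvP => x /tnthP [i ->]; rewrite tnth_mktuple.
  by apply: wedge_in_Ext => a.
move/dimvS; rewrite (eqnP Xfree) size_tuple.
by rewrite -(card_ltn_sorted_tuples j (\dim W)).
Qed.

End ExtSec4.

Lemma dim_Ext (k : fieldType) (V : vectType k) j (W : {vspace V}) : \dim (Ext j W) = 'C(\dim W, j).
Proof. by apply/eqP; rewrite eqn_leq dim_Ext_le dim_Ext_ge. Qed.

Lemma lfunE_lin (k : fieldType) (aT rT : vectType k) (f : aT -> rT) (fL : linear f) x :
  linfun f x = f x.
Proof.
pose F : {linear aT -> rT} := HB.pack f (GRing.isLinear.Build k aT rT *:%R f fL).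
exact: (lfunE F x).
Qed.

Definition sgn {k : fieldType} {n} (Y : {set 'I_n}) (i : 'I_n) : k := (-1) ^+ #|[set l in Y | (l < i)%N]|.

Section Chain.
Variables (k : fieldType) (V : vectType k) (n : nat) (H : 'I_n -> {vspace V}) (j : nat).

Lemma insE (X : {set 'I_n}) (t : ExtT V j) :
  ins V j X t = [ffun Y => if Y == X then t else 0].
Proof.
rewrite lfunE_lin // => a u v; apply/ffunP => Y; rewrite !ffunE.
by case: ifP => _; rewrite ?scaler0 ?addr0.
Qed.


Lemma bdryE (c : ChainT V n j) Y :
  bdry V n j c Y = \sum_(i : 'I_n | i \notin Y) sgn (k:=k) Y i *: c (i |: Y).
Proof.
rewrite lfunE_lin ?ffunE //.
move=> a u v; apply/ffunP => Z; rewrite !ffunE scaler_sumr -big_split /=.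
by apply: eq_bigr => i _; rewrite !ffunE scalerDr !scalerA mulrC.
Qed.

End Chain.

Section Chain2.
Variables (k : fieldType) (V : vectType k) (n : nat) (H : 'I_n -> {vspace V}) (j : nat).
Local Notation D := (bdry V n j).
Local Notation C := (chains H j).

Lemma fS_mono (X Y : {set 'I_n}) : X \subset Y -> (fS H Y <= fS H X)%VS.
Proof.
move=> sXY; apply/subv_bigcapP => i iX.
by apply: (bigcapv_inf i); [exact: (subsetP sXY) | exact: subvv].
Qed.

Lemma img_ins_off (X : {set 'I_n}) U u Y : u \in (ins V j X @: U)%VS -> Y != X -> u Y = 0.
Proof. by move=> /memv_imgP [t _ ->] nYX; rewrite insE ffunE (negbTE nYX). Qed.

Lemma memC m c : c \in C m <-> (forall Y : {set 'I_n}, #|Y| != m -> c Y = 0) /\ (forall Y, c Y \in Ext j (fS H Y)).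
Proof.
split.
  move/memv_sumP => [vs vsI ->].
  have cY : forall Y : {set 'I_n}, (\sum_(X : {set 'I_n} | #|X| == m) vs X) Y = if #|Y| == m then vs Y Y else 0.
    move=> Y; rewrite sum_ffunE; case: ifP => hY.
      rewrite (bigD1 Y) //= big1 ?addr0 // => X /andP [hX nXY].
      by apply: (img_ins_off (vsI X hX)); rewrite eq_sym.
    apply: big1 => X hX; apply: (img_ins_off (vsI X hX)).
    by apply: contraFneq hY => ->.
  split=> Y; rewrite cY; first by move/negbTE ->.
  case: ifP => hY; last exact: mem0v.
  by have /memv_imgP [t tE ->] := vsI Y hY; rewrite insE ffunE eqxx.
move=> [c0 cE].
have -> : c = \sum_(X : {set 'I_n} | #|X| == m) ins V j X (c X).
  apply/ffunP => Y; rewrite sum_ffunE.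
  have [hY|hY] := eqVneq #|Y| m.
    rewrite (bigD1 Y) ?hY //= insE ffunE eqxx big1 ?addr0 // => X /andP [_ nXY].
    by rewrite insE ffunE eq_sym (negbTE nXY).
  rewrite c0 // big1 // => X /eqP hX; rewrite insE ffunE.
  by case: eqP => // EYX; rewrite EYX hX eqxx in hY.
by apply: memv_sumr => X _; apply: memv_img.
Qed.

Lemma bdry_chains m : (D @: C m.+1 <= C m)%VS.
Proof.
apply/subvP => x /memv_imgP [c /memC [c0 cE] ->]; apply/memC; split=> Y.
  move=> hY; rewrite bdryE big1 // => i iY; rewrite c0 ?scaler0 //.
  by rewrite cardsU1 iY /= add1n eqSS.
rewrite bdryE; apply: memv_suml => i iY; apply: memvZ.
apply: (subvP (Ext_mono j (fS_mono (subsetUr [set i] Y)))); exact: cE.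
Qed.

Lemma bdry_C0 c : c \in C 0 -> D c = 0.
Proof.
move=> /memC [c0 _]; apply/ffunP => Y; rewrite bdryE ffunE big1 // => i iY.
by rewrite c0 ?scaler0 // cardsU1 iY.
Qed.

Lemma sgnU1 (Y : {set 'I_n}) i l : i \notin Y ->
  sgn (k:=k) (i |: Y) l = (if (i < l)%N then -1 else 1) * sgn Y l.
Proof.
move=> iY; rewrite /sgn.
case: ifP => il.
  rewrite (_ : [set x in i |: Y | (x < l)%N] = i |: [set x in Y | (x < l)%N]).
    by rewrite cardsU1 inE (negbTE iY) /= add1n exprS.
  by apply/setP => x; rewrite !inE; case: (x =P i) => [->|//]; rewrite il.
rewrite mul1r (_ : [set x in i |: Y | (x < l)%N] = [set x in Y | (x < l)%N]) //.
by apply/setP => x; rewrite !inE; case: (x =P i) => [->|//]; rewrite il (negbTE iY).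
Qed.

Lemma bdry2 c : D (D c) = 0.
Proof.
apply/ffunP => Y; rewrite bdryE ffunE.
under eq_bigr => i iY do rewrite bdryE scaler_sumr.
rewrite pair_big_dep /=.
pose F (p : 'I_n * 'I_n) := (sgn Y p.1 * sgn (p.1 |: Y) p.2) *: c (p.2 |: (p.1 |: Y)).
rewrite (eq_bigr F); last by move=> p _; rewrite scalerA.
rewrite (bigID (fun p : 'I_n * 'I_n => (p.1 < p.2)%N)) /=.
set P := fun p : 'I_n * 'I_n => _.
rewrite [X in _ + X](reindex_inj (h := fun p : 'I_n * 'I_n => (p.2, p.1))) /=; last first.
  by move=> [a b] [a' b'] /= [-> ->].
rewrite [X in _ + X](eq_bigl (fun p => (p.1 \notin Y) && (p.2 \notin p.1 |: Y) && (p.1 < p.2)%N)); last first.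
  move=> [a b] /=; rewrite !in_setU1 !negb_or.
  case: (ltngtP a b) => hab.
  - have nab : a != b by apply: contraTneq hab => ->; rewrite ltnn.
    rewrite (negbTE nab) eq_sym (negbTE nab) /=.
    by case: (a \in Y); case: (b \in Y).
  - have nab : a != b by apply: contraTneq hab => ->; rewrite ltnn.
    by rewrite (negbTE nab) eq_sym (negbTE nab) /= !andbF.
  - by move/val_inj: hab => ->; rewrite eqxx /= !andbF.
rewrite -big_split /= big1 // => [[a b]] /= /andP [/andP [aY]].
rewrite in_setU1 negb_or => /andP [nba bY] hab.
rewrite /F /= !sgnU1 // hab ltnNge (ltnW hab) /= setUCA.
rewrite mul1r mulN1r mulrN scaleNr mulrC addrC subrr //.
Qed.

End Chain2.

Lemma telescope (b a : nat -> int) N :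
  \sum_(m < N) (-1) ^+ m * (b m - a m.+1) =
  \sum_(m < N) (-1) ^+ m * (b m + a m) - a 0%N + (-1) ^+ N * a N.
Proof.
elim: N => [|N IH]; first by rewrite !big_ord0 expr0 mul1r sub0r addNr.
rewrite !big_ord_recr /= IH exprS.
ring.
Qed.

Section Euler.
Variables (k : fieldType) (V : vectType k) (n : nat) (H : 'I_n -> {vspace V}) (j : nat).
Local Notation D := (bdry V n j).
Local Notation C := (chains H j).

Lemma img_ker m : (D @: C m.+1 <= C m :&: lker D)%VS.
Proof.
rewrite subv_cap bdry_chains /=.
by apply/subvP => x /memv_imgP [c _ ->]; rewrite memv_ker bdry2.
Qed.

Lemma chains_big : C n.+1 = 0%VS.
Proof.
rewrite /chains big_pred0 // => X; apply/negbTE; rewrite neq_ltn.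
by rewrite (leq_ltn_trans (max_card _)) // card_ord.
Qed.

Lemma euler_dimC :
  euler H j = \sum_(m < n.+1) (-1) ^+ m * (\dim (C m))%:Z.
Proof.
pose K m := (\dim (C m :&: lker D))%:Z.
pose I m := (\dim (D @: C m))%:Z.
rewrite /euler (eq_bigr (fun m : 'I_n.+1 => (-1) ^+ m * (K m - I m.+1))); last first.
  move=> m _; rewrite /HCdim /K /I; congr (_ * _).
  by rewrite subzn // dimvS // img_ker.
rewrite (telescope K I) /I chains_big limg0 dimv0 mulr0 addr0.
rewrite (_ : (D @: C 0%N)%VS = 0%VS) ?dimv0 ?subr0; last first.
  apply/eqP; rewrite -subv0; apply/subvP => x /memv_imgP [c cC ->].
  by rewrite (bdry_C0 cC) mem0v.
apply: eq_bigr => m _; congr (_ * _); rewrite /K /I -PoszD.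
by rewrite limg_ker_dim.
Qed.

End Euler.

Section DimC.
Variables (k : fieldType) (V : vectType k) (n : nat) (H : 'I_n -> {vspace V}) (j : nat).

Lemma lker_ins (X : {set 'I_n}) : lker (ins V j X) = 0%VS.
Proof.
apply/eqP/lker0P => t t' E; have := congr1 (fun c : ChainT V n j => c X) E.
by rewrite !insE !ffunE eqxx.
Qed.

Lemma dim_chains m :
  \dim (chains H j m) = (\sum_(X : {set 'I_n} | #|X| == m) 'C(\dim (fS H X), j))%N.
Proof.
have dx : directv (\sum_(X : {set 'I_n} | #|X| == m) (ins V j X @: Ext j (fS H X))).
  apply/directv_sum_independent => us usI sum0 X hX.
  have offX : forall Z Y : {set 'I_n}, #|Z| == m -> Y != Z -> us Z Y = 0.
    by move=> Z Y hZ; apply: img_ins_off (usI Z hZ).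
  have uXX : us X X = 0.
    have := congr1 (fun c : ChainT V n j => c X) sum0.
    rewrite /= sum_ffunE ffunE (bigD1 X) //= big1 ?addr0 // => Z /andP [hZ nZX].
    by apply: offX hZ _; rewrite eq_sym.
  apply/ffunP => Y; rewrite ffunE; have [->|nYX] := eqVneq Y X; first exact: uXX.
  exact: offX.
rewrite /chains (directvP dx) /=.
by apply: eq_bigr => X _; rewrite limg_dim_eq ?dim_Ext // lker_ins capv0.
Qed.

End DimC.

Lemma euler_sum (k : fieldType) (V : vectType k) (n : nat) (H : 'I_n -> {vspace V}) (j : nat) :
  euler H j = \sum_(X : {set 'I_n}) (-1) ^+ #|X| * ('C(\dim (fS H X), j))%:Z.
Proof.
rewrite euler_dimC.
rewrite (partition_big (fun X : {set 'I_n} => inord #|X| : 'I_n.+1) xpredT) //.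
apply: eq_bigr => m _; rewrite dim_chains -natz natr_sum mulr_sumr.
have cX : forall X : {set 'I_n}, (#|X| < n.+1)%N.
  by move=> X; rewrite ltnS (leq_trans (max_card _)) // card_ord.
apply: eq_big => [X|X /eqP hX].
  apply/eqP/eqP => [E|<-]; last by rewrite inordK.
  by apply: val_inj; rewrite /= inordK.
by rewrite -hX natz.
Qed.

Lemma coef_XaddCn m j : (('X + 1 : {poly int}) ^+ m)`_j = ('C(m, j))%:Z.
Proof.
rewrite exprD1n coef_sum.
under eq_bigr => i _ do rewrite coefMn coefXn.
have [hj|hj] := ltnP j m.+1.
  rewrite (bigD1 (Ordinal hj)) //= eqxx big1 ?addr0 ?natz //.
  move=> i ni; rewrite (_ : (j == i) = false) ?mul0rn //.
  by apply/negbTE; apply: contra ni => /eqP E; apply/eqP/val_inj.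
rewrite bin_small // big1 // => i _; rewrite (_ : (j == i) = false) ?mul0rn //.
by apply/negbTE; apply: contraTneq hj => ->; rewrite -ltnNge ltn_ord.
Qed.

Lemma chiL_coef (k : fieldType) (V : vectType k) (n : nat) (H : 'I_n -> {vspace V}) j :
  (chiL H \Po ('X + 1))`_j = \sum_(x <- latt H) mobius H x * ('C(\dim x, j))%:Z.
Proof.
rewrite /chiL raddf_sum coef_sum; apply: eq_bigr => x _.
by rewrite /= comp_polyM comp_polyC comp_Xn_poly coefCM coef_XaddCn.
Qed.

Lemma alt_sum0 n (A : {set 'I_n}) a : a \in A ->
  \sum_(X : {set 'I_n} | X \subset A) (-1) ^+ #|X| = 0 :> int.
Proof.
move=> aA.
pose tau (X : {set 'I_n}) := if a \in X then X :\ a else a |: X.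
have tauK : involutive tau.
  move=> X; rewrite /tau; case aX: (a \in X).
    by rewrite setD11 setD1K.
  by rewrite setU11 setU1K ?aX.
set S := \sum_(X | _) _.
have : S = - S.
  rewrite {1}/S (reindex_inj (inv_inj tauK)) /= /S -sumrN.
  apply: eq_big => X.
    rewrite /tau; case: ifP => aX; apply/subsetP/subsetP => h x.
    - move=> xX; have [->//|nxa] := eqVneq x a.
      by apply: h; rewrite in_setD1 nxa.
    - by rewrite in_setD1 => /andP [_ /h].
    - by move=> xX; apply: h; rewrite in_setU1 xX orbT.
    - by rewrite in_setU1 => /orP [/eqP ->|/h].
  move=> _; rewrite /tau; case: ifP => aX.
    by rewrite (cardsD1 a X) aX add1n exprS mulN1r opprK.
  by rewrite cardsU1 aX add1n exprS mulN1r.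
by move=> E; lia.
Qed.

Section Mob.
Variables (k : fieldType) (V : vectType k) (n : nat) (H : 'I_n -> {vspace V}).
Hypothesis H_hyp : forall i, (\dim (H i)).+1 = \dim {:V}.

Definition nu (x : {vspace V}) : int := \sum_(X : {set 'I_n} | fS H X == x) (-1) ^+ #|X|.

Lemma latt_group (F : {set 'I_n} -> int) (P : pred {vspace V}) :
  \sum_(z <- latt H | P z) \sum_(X : {set 'I_n} | fS H X == z) F X =
  \sum_(X : {set 'I_n} | P (fS H X)) F X.
Proof.
rewrite (exchange_big_dep xpredT) //= [RHS]big_mkcond; apply: eq_bigr => X _.
rewrite big_const_seq.
have fL : fS H X \in latt H by rewrite mem_undup map_f ?mem_enum.
case: ifP => PX.
  rewrite (eq_count (a2 := pred1 (fS H X))); last first.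
    by move=> z /=; case: (eqVneq z (fS H X)) => [->|nz]; rewrite ?PX ?andbF.
  by rewrite count_uniq_mem ?undup_uniq // fL /= addr0.
have -> : count (fun i => P i && (fS H X == i)) (latt H) = 0%N.
  rewrite -(count_pred0 (latt H)); apply: eq_count => z /=.
  by case: (eqVneq z (fS H X)) => [->|nz]; rewrite ?PX ?andbF.
by [].
Qed.

Lemma fS0 : fS H set0 = fullv.
Proof. by rewrite /fS big_pred0 // => i; rewrite in_set0. Qed.

Lemma fS_full X : (fS H X == fullv) = (X == set0).
Proof.
apply/eqP/eqP => [E|->]; last exact: fS0.
apply/setP => i; rewrite in_set0; apply/negbTE/negP => iX.
have : (fS H X <= H i)%VS by apply: (bigcapv_inf i) => //; exact: subvv.
rewrite E => /dimvS; rewrite -(H_hyp i) ltnn //.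
Qed.

Lemma nu_full : nu fullv = 1.
Proof.
rewrite /nu (big_pred1 set0) ?cards0 ?expr0 // => X.
by rewrite /= fS_full.
Qed.

Lemma nu_rec y : y \in latt H -> y != fullv ->
  \sum_(z <- latt H | (y <= z)%VS) nu z = 0.
Proof.
move=> yL ny; rewrite /nu latt_group.
move: yL; rewrite mem_undup => /mapP [Y _ Ey].
have [a aY] : exists a, a \in Y.
  case: (set_0Vmem Y) => [Y0|[a aY]]; last by exists a.
  by rewrite Ey Y0 fS0 eqxx in ny.
pose A := [set i | (y <= H i)%VS].
rewrite (eq_bigl (fun X : {set 'I_n} => X \subset A)); first apply: (alt_sum0 (a := a)).
  by rewrite inE Ey; apply: (bigcapv_inf a) => //; exact: subvv.
move=> X; apply/subv_bigcapP/subsetP => h i.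
  by move=> iX; rewrite inE; apply: h.
by move/h; rewrite inE.
Qed.

Lemma mob_nu_aux f y : y \in latt H -> (\dim {:V} < \dim y + f)%N ->
  mob_aux (latt H) f y = nu y.
Proof.
elim: f y => [|f IH] y yL hd.
  by rewrite addn0 ltnNge dimvS ?subvf in hd.
rewrite /=; case: eqP => [->|/eqP ny]; first by rewrite nu_full.
have := nu_rec yL ny; rewrite big_mkcond (bigD1_seq y) ?undup_uniq //= subvv.
move/eqP; rewrite addr_eq0 => /eqP ->; congr (- _).
rewrite (eq_bigl (fun z : {vspace V} => (z != y) && (y <= z)%VS)); last by move=> z; rewrite andbC.
rewrite big_mkcondr big_seq_cond [RHS]big_seq_cond; apply: eq_bigr => z /andP [zL nzy].
case: ifP => // yz; apply: IH => //.
have lt : (\dim y < \dim z)%N.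
  by case: (dimv_leqif_eq yz) => le eqd; rewrite ltn_neqAle le andbT eqd eq_sym.
lia.
Qed.

Lemma mob_nu y : y \in latt H -> mobius H y = nu y.
Proof.
move=> yL; apply: mob_nu_aux => //.
by rewrite addnS ltnS leq_addl.
Qed.

End Mob.

Unset Implicit Arguments.
Theorem proposition6 (k : fieldType) (V : vectType k) (n : nat)
  (H : 'I_n -> {vspace V}) (H_inj : injective H)
  (H_hyp : forall i, (\dim (H i)).+1 = \dim {:V}) (j : nat) :
  euler H j = (chiL H \Po ('X + 1))`_j.
Proof.
rewrite euler_sum chiL_coef.
transitivity (\sum_(x <- latt H) \sum_(X : {set 'I_n} | fS H X == x)
                 (-1) ^+ #|X| * ('C(\dim (fS H X), j))%:Z).
  by rewrite (latt_group H _ xpredT).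
rewrite big_seq [RHS]big_seq; apply: eq_bigr => x xL.
rewrite (mob_nu H_hyp xL) /nu mulr_suml; apply: eq_bigr => X /eqP -> //.
Qed.
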